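(* In the type $\mathbb A$ setting described in the context, for all $0\le i\le m-2$, $1\le k\le m-1-i$ and $0\le j\le i$ we have $$\mu_{(\mathbf x[i],B[i])}(x_k[i])=\frac{x_{k-1}[i]+x_{k+1}[i]}{x_k[i]}=\frac{x_{k-1+j}[i-j]+x_{k+1+j}[i-j]}{x_{k+j}[i-j]},$$ where $\mu_{(\mathbf y,C)}(y_k)$ denotes the $k$th entry of the first component of $\mu_k(\mathbf y,C)$.
   Context: Let $K$ be a field of characteristic $0$ or $K=\mathbb Z$, let $n\ge1$, $m=n+1$, $p=n$, and $\mathcal F=K(X_1,\dots,X_m)$. Let $B=(b_{ij})\in M_{m,n}(\mathbb Z)$ have $b_{i,i+1}=-1$ for $1\le i\le n-1$, $b_{i+1,i}=1$ for $1\le i\le n$, and all other entries $0$ (so the last row is $(0,\dots,0,1)$). Let $\mathbf x=(x_1,\dots,x_m)$ be algebraically independent over $K$ in $\mathcal F$. For $1\le k\le n$ the mutation $\mu_k(\mathbf y,C)=(\mathbf y',C')$ of a pair $(\mathbf y,C)$ is given by $c'_{ij}=-c_{ij}$ if $i=k$ or $j=k$, and $c'_{ij}=c_{ij}+\frac{|c_{ik}|c_{kj}+c_{ik}|c_{kj}|}{2}$ otherwise; $y'_s=y_s$ for $s\neq k$ and $y'_k=y_k^{-1}\big(\prod_{c_{ik}>0}y_i^{c_{ik}}+\prod_{c_{ik}<0}y_i^{-c_{ik}}\big)$. Set $(\mathbf x[0],B[0])=(\mathbf x,B)$ and, for $1\le i\le m-1$, $(\mathbf x[i],B[i])=\mu_{m-i}\cdots\mu_2\mu_1(\mathbf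 x[i-1],B[i-1])$ (apply $\mu_1$ first). Write $\mathbf x[i]=(x_1[i],\dots,x_m[i])$ and use the conventions $x_0[i]=1$, $x_{-1}[i]=0$ for all $i$. *)

(* Defs.v *)
From HB Require Import structures.
From mathcomp Require Import all_boot all_order all_algebra.
From mathcomp Require Import mpoly.
Set Implicit Arguments. Unset Strict Implicit. Unset Printing Implicit Defensive.
Import Order.TTheory GRing.Theory Num.Theory.
Local Open Scope ring_scope.

Definition ratfun (K : idomainType) (m : nat) := {fraction {mpoly K[m]}}.

Definition constF (K : idomainType) (m : nat) (c : K) : ratfun K m :=
  @FracField.tofrac _ (c%:MP).

(* x_1,...,x_m (stored at nat indices 1..m) are algebraically independent
   over K in F. *)
Definition alg_indep (K : idomainType) (m : nat) (x : nat -> ratfun K m) :=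
  forall p : {mpoly K[m]},
    (map_mpoly (@constF K m) p).@[fun i : 'I_m => x i.+1] = 0 -> p = 0.

(* A seed: cluster y_1..y_m (nat indices 1..m) and integer matrix C
   (entries c_{ij} at nat indices i in 1..m, j in 1..n). *)
Definition seed (F : Type) := ((nat -> F) * (nat -> nat -> int))%type.

Definition mut_mx (k : nat) (C : nat -> nat -> int) : nat -> nat -> int :=
  fun i j =>
    if (i == k) || (j == k) then - C i j
    else C i j + ((`|C i k|%N%:Z * C k j + C i k * `|C k j|%N%:Z) %/ 2)%Z.

Definition mutate (F : fieldType) (m k : nat) (s : seed F) : seed F :=
  let y := s.1 in let C := s.2 in
  (fun l => if l == k then
      (y k)^-1 * (\prod_(1 <= i < m.+1 | (0 < C i k)%R) y i ^+ `|C i k|%N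
                 + \prod_(1 <= i < m.+1 | (C i k < 0)%R) y i ^+ `|C i k|%N)
    else y l,
   mut_mx k C).

(* mu_r ... mu_2 mu_1 s  (mu_1 applied first). *)
Definition mutate_upto (F : fieldType) (m r : nat) (s : seed F) : seed F :=
  foldl (fun t k => mutate m k t) s (iota 1 r).

(* The type A exchange matrix B (m = n+1 rows, n columns), 1-based. *)
Definition BA (n : nat) : nat -> nat -> int := fun i j =>
  if [&& 1 <= i, i <= n.-1 & j == i.+1]%N then -1
  else if [&& 1 <= j, j <= n & i == j.+1]%N then 1
  else 0.

(* (x[i], B[i]) with (x[0],B[0]) = (x,B),
   (x[i],B[i]) = mu_{m-i} ... mu_1 (x[i-1],B[i-1]). *)
Fixpoint seedA (F : fieldType) (n : nat) (x : nat -> F) (i : nat) : seed F :=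
  match i with
  | 0 => (x, BA n)
  | i'.+1 => mutate_upto n.+1 (n.+1 - i'.+1) (seedA n x i')
  end.

Definition xA (F : fieldType) (n : nat) (x : nat -> F) (i l : nat) : F :=
  if l == 0%N then 1 else (seedA n x i).1 l.

(* Main.v *)
Require Import Defs.
From HB Require Import structures.
From mathcomp Require Import all_boot all_order all_algebra.
From mathcomp Require Import mpoly.
From mathcomp Require Import zify ring lra.
Import Order.TTheory GRing.Theory Num.Theory.
Local Open Scope ring_scope.
Set Implicit Arguments. Unset Strict Implicit.
Definition sgb (b : bool) : int := if b then 1 else -1.
Definition Mx (n : nat) (s : nat -> bool) : nat -> nat -> int := fun i j =>
  if [&& 1 <= j, j <= n & i == j.+1]%N then sgb (s j)
  else if [&& 1 <= i, i.+1 <= n & j == i.+1]%N then - sgb (s i) else 0.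
Definition flip (s : nat -> bool) (k : nat) := fun c =>
  if (c == k.-1) || (c == k) then ~~ s c else s c.

Lemma sgbN b : sgb (~~ b) = - sgb b. Proof. by case: b. Qed.

Lemma Mx_ext n s s' i j : (forall c, (1 <= c <= n)%N -> s c = s' c) ->
  Mx n s i j = Mx n s' i j.
Proof.
move=> H; rewrite /Mx; case: ifP => [/and3P[h h' _]|_]; first by rewrite H // h h'.
case: ifP => [/and3P[h h' _]|_] //; rewrite H // h /=; exact: ltnW.
Qed.

Lemma BA_Mx n i j : BA n i j = Mx n (fun _ => true) i j.
Proof.
rewrite /BA /Mx /=.
have -> : [&& 1 <= i, i <= n.-1 & j == i.+1]%N = [&& 1 <= i, i.+1 <= n & j == i.+1]%N.
  by case: n => [|n]; case: i => [|i].
case: (boolP [&& 1 <= j, j <= n & i == j.+1]%N) => h1;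
case: (boolP [&& 1 <= i, i.+1 <= n & j == i.+1]%N) => h2 //.
move: h1 h2 => /and3P[_ _ /eqP h1] /and3P[_ _ /eqP h2]; lia.
Qed.
Lemma Mx_flip_other n s k a b : (1 <= k)%N -> a != k -> b != k ->
  Mx n (flip s k) a b = Mx n s a b.
Proof.
move=> k1 ha hb; rewrite /Mx /flip.
case: ifP => [/and3P[_ _ /eqP e]|_].
  have -> : (b == k.-1) || (b == k) = false by apply/negbTE/negP => /orP[] /eqP; lia.
  by [].
case: ifP => [/and3P[_ _ /eqP e]|_] //.
have -> : (a == k.-1) || (a == k) = false by apply/negbTE/negP => /orP[] /eqP; lia.
by [].
Qed.

Lemma extra0 (u v : int) : u * v <= 0 ->
  ((`|u|%N%:Z * v + u * `|v|%N%:Z) %/ 2)%Z = 0.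
Proof.
move=> h.
suff -> : `|u|%N%:Z * v + u * `|v|%N%:Z = 0 by [].
rewrite !abszE.
case: (lerP 0 u) => hu; case: (lerP 0 v) => hv.
- rewrite !ger0_norm //; nra.
- rewrite ger0_norm // ltr0_norm //; nra.
- rewrite ltr0_norm // ger0_norm //; nra.
- rewrite !ltr0_norm //; nra.
Qed.

Lemma sgb_mul_neq b1 b2 : b1 != b2 -> sgb b1 * sgb b2 = -1.
Proof. by case: b1; case: b2. Qed.
Lemma sgb_mul_eq b : sgb b * sgb b = 1.
Proof. by case: b. Qed.

Lemma Mx_prod n s k a b : (1 <= k)%N -> (1 < k -> s k.-1 != s k)%N ->
  Mx n s a k * Mx n s k b <= 0.
Proof.
move=> k1 hs; rewrite /Mx.
case: ifP => [/and3P[_ _ /eqP e1]|_].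
  case: ifP => [/and3P[h3 _ /eqP e2]|_].
    by subst; rewrite /= in hs *; rewrite sgb_mul_neq // eq_sym hs.
  case: ifP => [/and3P[_ _ /eqP e2]|_]; last by rewrite mulr0.
  by subst; rewrite mulrN sgb_mul_eq.
case: ifP => [/and3P[h3 _ /eqP e1]|_]; last by rewrite mul0r.
case: ifP => [/and3P[h4 _ /eqP e2]|_].
  by subst; case: e2 => ->; rewrite mulNr sgb_mul_eq.
case: ifP => [/and3P[_ _ /eqP e2]|_]; last by rewrite mulr0.
by subst; rewrite /= in hs *; rewrite mulrNN sgb_mul_neq ?hs.
Qed.
Lemma mut_Mx n s C k : (1 <= k)%N -> (1 < k -> s k.-1 != s k)%N ->
  (forall a b, C a b = Mx n s a b) ->
  forall a b, mut_mx k C a b = Mx n (flip s k) a b.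
Proof.
move=> k1 hs hC a b; rewrite /mut_mx !hC.
case: ifP => hab.
  rewrite /Mx /flip.
  case/orP: hab => /eqP ->.
    case: ifP => [/and3P[_ _ /eqP e]|_].
      by subst; rewrite /= eqxx /= sgbN.
    case: ifP => [/and3P[_ _ /eqP e]|_]; last by rewrite oppr0.
    by subst; rewrite eqxx orbT sgbN.
  case: ifP => [/and3P[_ _ /eqP e]|_].
    by subst; rewrite eqxx orbT sgbN.
  case: ifP => [/and3P[_ _ /eqP e]|_]; last by rewrite oppr0.
  by subst; rewrite /= eqxx /= sgbN.
move/negbT: hab; rewrite negb_or => /andP[ha hb].
by rewrite extra0 ?addr0 ?Mx_flip_other // Mx_prod.
Qed.
Lemma abs_sgb b : `|sgb b|%N = 1%N. Proof. by case: b. Qed.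

Lemma colprod (F : fieldType) n s C k (y : nat -> F) (P : int -> bool) :
  (1 <= k)%N -> (k <= n)%N -> P 0 = false -> (forall a b, C a b = Mx n s a b) ->
  \prod_(1 <= i < n.+2 | P (C i k)) y i ^+ `|C i k|%N =
  (if P (sgb (s k)) then y k.+1 else 1) *
  (if (1 < k)%N && P (- sgb (s k.-1)) then y k.-1 else 1).
Proof.
move=> k1 kn P0 hC; rewrite big_mkcond.
transitivity (\prod_(1 <= i < n.+2)
  ((if i == k.+1 then (if P (sgb (s k)) then y k.+1 else 1) else 1) *
   (if i == k.-1 then (if (1 < k)%N && P (- sgb (s k.-1)) then y k.-1 else 1) else 1))).
  apply: eq_bigr => i _; rewrite hC /Mx.
  case: (eqVneq i k.+1) => [->|h1].
    rewrite k1 kn /=.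
    have -> : (k.+1 == k.-1) = false by apply/negbTE/eqP; lia.
    by rewrite mulr1; case: ifP => //; rewrite abs_sgb expr1.
  rewrite !andbF mul1r.
  case: (eqVneq i k.-1) => [->|h2].
    case: (ltnP 1 k) => hk /=.
      have -> : [&& (0 < k.-1)%N, (k.-1.+1 <= n)%N & k == k.-1.+1] by apply/and3P; split; apply/eqP || idtac; lia.
      by case: ifP => //; rewrite abszN abs_sgb expr1.
    have -> : (0 < k.-1)%N = false by lia.
    by rewrite /= P0.
  have -> : [&& (0 < i)%N, (i.+1 <= n)%N & k == i.+1] = false.
    by apply/negbTE/negP => /and3P[_ _ /eqP e]; move/eqP: h2; apply; lia.
  by rewrite P0.
rewrite big_split /= -!big_mkcond !big_nat1_eq.
have -> : (1 <= k.+1 < n.+2)%N by lia.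
case: (ltnP 1 k) => hk /=; last by rewrite if_same.
by have -> : (1 <= k.-1 < n.+2)%N by lia.
Qed.
Section Pos.
End Pos.

Definition evp (K : idomainType) (m : nat) (x : nat -> ratfun K m) (p : {mpoly K[m]}) :=
  (map_mpoly (@constF K m) p).@[fun i : 'I_m => x i.+1].

Definition Np (K : idomainType) (m : nat) (p : {mpoly K[m]}) :=
  exists a : nat, (0 < a)%N /\ p.@[fun _ => 1] = a%:R.

Definition Sf (K : idomainType) (m : nat) (x : nat -> ratfun K m) (f : ratfun K m) :=
  exists p q, [/\ Np p, Np q & f = evp x p / evp x q].

Lemma evpM (K : idomainType) m (x : nat -> ratfun K m) (p q : {mpoly K[m]}) : evp x (p * q) = evp x p * evp x q.
Proof.
rewrite /evp.
change (meval (fun i : 'I_m => x i.+1) (map_mpoly ((@FracField.tofrac _) \o (@mpolyC m K)) (p * q)) =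
  meval (fun i : 'I_m => x i.+1) (map_mpoly ((@FracField.tofrac _) \o (@mpolyC m K)) p) *
  meval (fun i : 'I_m => x i.+1) (map_mpoly ((@FracField.tofrac _) \o (@mpolyC m K)) q)).
by rewrite rmorphM mevalM.
Qed.

Lemma evpD (K : idomainType) m (x : nat -> ratfun K m) (p q : {mpoly K[m]}) : evp x (p + q) = evp x p + evp x q.
Proof.
rewrite /evp.
change (meval (fun i : 'I_m => x i.+1) (map_mpoly ((@FracField.tofrac _) \o (@mpolyC m K)) (p + q)) =
  meval (fun i : 'I_m => x i.+1) (map_mpoly ((@FracField.tofrac _) \o (@mpolyC m K)) p) +
  meval (fun i : 'I_m => x i.+1) (map_mpoly ((@FracField.tofrac _) \o (@mpolyC m K)) q)).
by rewrite raddfD mevalD.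
Qed.

Lemma evp1 (K : idomainType) m (x : nat -> ratfun K m) : evp x (1 : {mpoly K[m]}) = 1.
Proof.
rewrite /evp.
change (meval (fun i : 'I_m => x i.+1) (map_mpoly ((@FracField.tofrac _) \o (@mpolyC m K)) 1) = 1).
by rewrite rmorph1 meval1.
Qed.

Lemma evpX (K : idomainType) m (x : nat -> ratfun K m) (i : 'I_m) : evp x ('X_i : {mpoly K[m]}) = x i.+1.
Proof.
rewrite /evp.
change (meval (fun i : 'I_m => x i.+1) (map_mpoly ((@FracField.tofrac _) \o (@mpolyC m K)) 'X_[U_(i)]) = x i.+1).
by rewrite map_mpolyX mevalXU.
Qed.

Lemma Np1 (K : idomainType) m : Np (1 : {mpoly K[m]}).
Proof. by exists 1%N; rewrite meval1. Qed.
Lemma NpX (K : idomainType) m (i : 'I_m) : Np ('X_i : {mpoly K[m]}).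
Proof. by exists 1%N; rewrite mevalXU. Qed.
Lemma NpD (K : idomainType) m (p q : {mpoly K[m]}) : Np p -> Np q -> Np (p + q).
Proof.
by move=> [a [a0 ha]] [b [b0 hb]]; exists (a + b)%N; rewrite mevalD ha hb natrD addn_gt0 a0.
Qed.
Lemma NpM (K : idomainType) m (p q : {mpoly K[m]}) : Np p -> Np q -> Np (p * q).
Proof.
by move=> [a [a0 ha]] [b [b0 hb]]; exists (a * b)%N; rewrite mevalM ha hb natrM muln_gt0 a0.
Qed.

Lemma evp_neq0 (K : idomainType) m (x : nat -> ratfun K m) (hK : [pchar K] =i pred0) (hx : alg_indep x)
  (p : {mpoly K[m]}) : Np p -> evp x p != 0.
Proof.
move=> [a [a0 ha]]; apply/eqP => /hx hp.
move: ha; rewrite hp meval0 => ha.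
have h := (pcharf0P K).1 hK a; rewrite -ha eqxx in h.
by move: a0; rewrite lt0n -h.
Qed.

Lemma Sf_neq0 (K : idomainType) m (x : nat -> ratfun K m) (hK : [pchar K] =i pred0) (hx : alg_indep x)
  (f : ratfun K m) : Sf x f -> f != 0.
Proof.
move=> [p [q [hp hq ->]]].
by rewrite mulf_neq0 ?invr_neq0 ?evp_neq0.
Qed.

Lemma Sf1 (K : idomainType) m (x : nat -> ratfun K m) : Sf x (1 : ratfun K m).
Proof. by exists 1, 1; split; [exact: Np1|exact: Np1|rewrite evp1 divr1]. Qed.

Lemma SfX (K : idomainType) m (x : nat -> ratfun K m) (i : 'I_m) : Sf x (x i.+1).
Proof. by exists 'X_i, 1; split; [exact: NpX|exact: Np1|rewrite evp1 divr1 evpX]. Qed.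

Lemma SfM (K : idomainType) m (x : nat -> ratfun K m) (hK : [pchar K] =i pred0) (hx : alg_indep x)
  (f g : ratfun K m) : Sf x f -> Sf x g -> Sf x (f * g).
Proof.
move=> [p [q [hp hq ->]]] [p' [q' [hp' hq' ->]]].
exists (p * p'), (q * q'); split; [exact: NpM|exact: NpM|rewrite !evpM].
by rewrite invfM; rewrite mulrACA.
Qed.

Lemma SfV (K : idomainType) m (x : nat -> ratfun K m) (f : ratfun K m) : Sf x f -> Sf x f^-1.
Proof.
move=> [p [q [hp hq ->]]]; exists q, p; split => //.
by rewrite invfM invrK mulrC.
Qed.

Lemma SfD (K : idomainType) m (x : nat -> ratfun K m) (hK : [pchar K] =i pred0) (hx : alg_indep x)
  (f g : ratfun K m) : Sf x f -> Sf x g -> Sf x (f + g).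
Proof.
move=> [p [q [hp hq ->]]] [p' [q' [hp' hq' ->]]].
exists (p * q' + p' * q), (q * q'); split; [by apply: NpD; apply: NpM|exact: NpM|].
have h1 := evp_neq0 hK hx hq; have h2 := evp_neq0 hK hx hq'.
rewrite evpD !evpM.
move: (evp x p) (evp x q) (evp x p') (evp x q') h1 h2 => a b c d h1 h2.
by rewrite addf_div.
Qed.
Definition sR (t r : nat) : nat -> bool := fun c =>
  if (c < r)%N then true else if c == r then false else (c <= t)%N.

Lemma mutate_upto_S (F : fieldType) m r (s : seed F) :
  mutate_upto m r.+1 s = mutate m r.+1 (mutate_upto m r s).
Proof.
rewrite /mutate_upto.
have -> : iota 1 r.+1 = rcons (iota 1 r) r.+1.
  by rewrite -cats1 -[in LHS](addn1 r) iotaD add1n.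
by rewrite foldl_rcons.
Qed.

Lemma step_inv (F : fieldType) n (a : nat -> F) C0 t r : (t <= n)%N -> (r <= t)%N ->
  (forall u v, C0 u v = Mx n (fun c => (c <= t)%N) u v) ->
  let st := mutate_upto n.+1 r (a, C0) in
  [/\ (forall u v, st.2 u v = Mx n (sR t r) u v),
      (forall l, (r < l)%N || (l == 0)%N -> st.1 l = a l) &
      (forall l, (1 <= l <= r)%N ->
         st.1 l = (a l)^-1 * ((if l.-1 == 0%N then 1 else st.1 l.-1) * a l.+1 + 1))].
Proof.
move=> tn; elim: r => [|r IH] rt hC0 /=.
  split => //.
  by move=> u v; rewrite hC0; apply: Mx_ext => c /andP[c1 _]; rewrite /sR /=; case: c c1.
  by move=> l; lia.
have [h2 h1 h3] := IH (ltnW rt) hC0.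
rewrite mutate_upto_S.
set st := mutate_upto n.+1 r (a, C0) in h1 h2 h3 *.
have hs : (1 < r.+1)%N -> sR t r r.+1.-1 != sR t r r.+1.
  move=> _; rewrite /sR /= ltnn eqxx.
  have -> : (r.+1 < r)%N = false by lia.
  have -> : (r.+1 == r) = false by lia.
  by rewrite rt.
split.
- move=> u v; rewrite /mutate /= (mut_Mx (n := n) (s := sR t r)) //.
  apply: Mx_ext => c /andP[c1 _]; rewrite /flip /sR /=.
  by repeat (case: ifP => ? //=); lia.
- move=> l hl; rewrite /mutate /=.
  have -> : (l == r.+1) = false by lia.
  by apply: h1; lia.
- move=> l hl; rewrite /mutate /=.
  case: (eqVneq l r.+1) => [->|hlr].
    rewrite (@colprod _ n (sR t r) st.2 r.+1 st.1 (fun v => 0 < v)) //; try lia.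
    rewrite (@colprod _ n (sR t r) st.2 r.+1 st.1 (fun v => v < 0)) //; try lia.
    have e1 : sR t r r.+1 = true by rewrite /sR; repeat (case: ifP => ? //=); lia.
    have e2 : sR t r r = false by rewrite /sR; repeat (case: ifP => ? //=); lia.
    rewrite /= e1 e2 /= (h1 r.+1) ?ltnSn // (h1 r.+2) ?ltnSn ?orTb; last by rewrite ltnS leqnSn.
    have -> : (r == r.+1) = false by lia.
    have -> : (1 < r.+1)%N = (r != 0%N) by lia.
    rewrite ltr01 ltr10 /= andbT andbF /= mul1r.
    case: (eqVneq r 0%N) => [->|hr] /=; first by rewrite mulr1 mul1r.
    by rewrite [a r.+2 * _]mulrC.
  have hl' : (l <= r)%N by lia.
  rewrite (h3 l) ?hl' ?andbT; last by case/andP: hl.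
  have -> : (l.-1 == r.+1) = false by lia.
  by [].
Qed.
Lemma seedA_Mx (F : fieldType) n (x : nat -> F) i :
  forall u v, (seedA n x i).2 u v = Mx n (fun c => (c <= n - i)%N) u v.
Proof.
elim: i => [|i IH] u v.
  by rewrite /= BA_Mx; apply: Mx_ext => c /andP[_ h]; rewrite subn0 h.
rewrite /= subSS.
case: (seedA n x i) IH => a C0 IH.
have [h2 _ _] := @step_inv F n a C0 (n - i) (n - i) (leq_subr _ _) (leqnn _) IH.
rewrite h2; apply: Mx_ext => c /andP[c1 _]; rewrite /sR.
by repeat (case: ifP => ? //=); lia.
Qed.

Lemma seedA_step (F : fieldType) n (x : nat -> F) i :
  (forall l, (n - i < l)%N || (l == 0%N) -> (seedA n x i.+1).1 l = (seedA n x i).1 l) /\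
  (forall l, (1 <= l <= n - i)%N -> (seedA n x i.+1).1 l =
     ((seedA n x i).1 l)^-1 * (xA n x i.+1 l.-1 * (seedA n x i).1 l.+1 + 1)).
Proof.
have hM := @seedA_Mx F n x i.
rewrite /xA /=.
rewrite subSS.
case: (seedA n x i) hM => a C0 hM.
have [_ h1 h3] := @step_inv F n a C0 (n - i) (n - i) (leq_subr _ _) (leqnn _) hM.
by split.
Qed.
Lemma alg_id (F : fieldType) (ak ak1 ak2 bk bk1 bkm : F) : ak != 0 -> ak1 != 0 -> bk != 0 ->
  bk = ak^-1 * (bkm * ak1 + 1) -> bk1 = ak1^-1 * (bk * ak2 + 1) ->
  (bkm + bk1) / bk = (ak + ak2) / ak1.
Proof.
move=> h1 h2 h3 hbk hbk1.
have hm : bkm = (bk * ak - 1) / ak1.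
  rewrite [in RHS]hbk; field; by rewrite h1 h2.
rewrite hbk1 hm; field; by rewrite h2 h3.
Qed.

Lemma xA_lo (F : fieldType) n (x : nat -> F) i l : (1 <= l <= n - i)%N ->
  xA n x i.+1 l = (xA n x i l)^-1 * (xA n x i.+1 l.-1 * xA n x i l.+1 + 1).
Proof.
move=> hl; have [_ h] := seedA_step n x i.
have l0 : (l == 0%N) = false by lia.
by rewrite /xA l0 /= h.
Qed.

Lemma xA_hi (F : fieldType) n (x : nat -> F) i l : (n - i < l)%N ->
  xA n x i.+1 l = xA n x i l.
Proof.
move=> hl; have [h _] := seedA_step n x i.
by rewrite /xA h ?hl.
Qed.

Lemma xA_S (K : idomainType) (hK : [pchar K] =i pred0) n (x : nat -> ratfun K n.+1)
  (hx : alg_indep x) i l : (l <= n.+1)%N -> Sf x (xA n x i l).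
Proof.
elim: i l => [|i IH] l.
  move=> hl; rewrite /xA /=; case: eqP => [_|/eqP l0]; first exact: Sf1.
  have h : (l.-1 < n.+1)%N by lia.
  have := SfX x (Ordinal h); rewrite /= prednK //; lia.
elim: l => [|l IHl] hl; first by rewrite /xA /=; exact: Sf1.
case: (ltnP (n - i) l.+1) => hli; first by rewrite xA_hi //; apply: IH.
rewrite xA_lo; last by lia.
apply: SfM => //; first by apply: SfV; apply: IH.
apply: SfD => //; last exact: Sf1.
apply: SfM => //; first by apply: IHl; lia.
by apply: IH; lia.
Qed.
Definition Dq (F : fieldType) n (x : nat -> F) i k :=
  (xA n x i k.-1 + xA n x i k.+1) / xA n x i k.

Lemma D_shift (K : idomainType) (hK : [pchar K] =i pred0) n (x : nat -> ratfun K n.+1)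
  (hx : alg_indep x) i k : (1 <= k)%N -> (k.+1 <= n - i)%N ->
  Dq n x i.+1 k = Dq n x i k.+1.
Proof.
move=> k1 hk; rewrite /Dq /=.
apply: (@alg_id _ (xA n x i k) (xA n x i k.+1) (xA n x i k.+2)).
- by apply: (Sf_neq0 hK hx); apply: xA_S => //; lia.
- by apply: (Sf_neq0 hK hx); apply: xA_S => //; lia.
- by apply: (Sf_neq0 hK hx); apply: xA_S => //; lia.
- by rewrite xA_lo //; lia.
- by rewrite xA_lo //; lia.
Qed.

Lemma D_iter (K : idomainType) (hK : [pchar K] =i pred0) n (x : nat -> ratfun K n.+1)
  (hx : alg_indep x) i k j : (1 <= k)%N -> (k <= n - i)%N -> (i <= n)%N -> (j <= i)%N ->
  Dq n x i k = Dq n x (i - j) (k + j).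
Proof.
move=> k1 hk hi; elim: j => [|j IH] hj; first by rewrite subn0 addn0.
rewrite IH; last by lia.
have -> : (i - j = (i - j.+1).+1)%N by lia.
rewrite D_shift // ?addnS //; lia.
Qed.

Unset Implicit Arguments.

Theorem lemma7p1 (K : idomainType) (hK : [pchar K] =i pred0) (n : nat)
  (hn : (1 <= n)%N) (x : nat -> ratfun K n.+1)
  (hx : alg_indep x) (i k j : nat) :
  (i <= n.+1 - 2)%N -> (1 <= k)%N -> (k <= n.+1 - 1 - i)%N -> (j <= i)%N ->
  (mutate n.+1 k (seedA n x i)).1 k
    = (xA n x i k.-1 + xA n x i k.+1) / xA n x i k
  /\ (xA n x i k.-1 + xA n x i k.+1) / xA n x i k
    = (xA n x (i - j) (k.-1 + j) + xA n x (i - j) (k.+1 + j))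
        / xA n x (i - j) (k + j).
Proof.
move=> hi k1 hk hj.
have hM := seedA_Mx n x i.
split.
  rewrite /mutate /= eqxx.
  rewrite (@colprod _ n (fun c => (c <= n - i)%N) (seedA n x i).2 k (seedA n x i).1 (fun v => 0 < v)) //; try lia.
  rewrite (@colprod _ n (fun c => (c <= n - i)%N) (seedA n x i).2 k (seedA n x i).1 (fun v => v < 0)) //; try lia.
  have -> : (k <= n - i)%N = true by lia.
  have -> : (k.-1 <= n - i)%N = true by lia.
  rewrite /=.
  have -> : (0 < -1 :> int) = false by [].
  have -> : (-1 < 0 :> int) = true by [].
  rewrite andbF andbT /= mulr1 mul1r /xA.
  have -> : (k == 0%N) = false by lia.
  case: (eqVneq k 1%N) => [->|hk1] /=; first by rewrite mulrC addrC.
  have -> : (1 < k)%N = true by lia.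
  have -> : (k.-1 == 0%N) = false by lia.
  by rewrite mulrC addrC.
have -> : (k.-1 + j = (k + j).-1)%N by lia.
have -> : (k.+1 + j = (k + j).+1)%N by lia.
apply: (D_iter hK hx); lia.
Qed.
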